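(* Let $\alpha,\beta\in\mathbb{R}$ with $\alpha\neq 0$, and let $G_1$ be the connected, simply connected Lie group whose Lie algebra $\mathfrak{g}_1$ has a basis $\{e_1,e_2,e_3\}$ with $[e_1,e_2]=\alpha e_1-\beta e_3$, $[e_1,e_3]=-\alpha e_1-\beta e_2$, $[e_2,e_3]=\beta e_1+\alpha e_2+\alpha e_3$, equipped with the left-invariant Lorentzian metric $g$ for which $\{e_1,e_2,e_3\}$ is pseudo-orthonormal with $e_3$ timelike, and with the product structure $J$. Let $\lambda_0,c\in\mathbb{R}$. Then there exists a derivation $D$ of $\mathfrak{g}_1$ with $\widetilde{\mathrm{Ric}}^0=(s^0\lambda_0+c)\mathrm{Id}+D$ (i.e. $(G_1,g,J)$ is an algebraic Schouten soliton associated to the canonical connection $\nabla^0$) if and only if $\beta=0$ and $c=-\frac12\alpha^2+2\alpha^2\lambda_0$.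
   Context: Pseudo-orthonormal means $g(e_1,e_1)=g(e_2,e_2)=1$, $g(e_3,e_3)=-1$, $g(e_i,e_j)=0$ for $i\neq j$; left-invariant tensors are identified with their values on $\mathfrak{g}$. $\nabla$ is the Levi-Civita connection of $g$. The product structure $J$ is the left-invariant endomorphism with $Je_1=e_1$, $Je_2=e_2$, $Je_3=-e_3$. The canonical connection is $\nabla^0_XY=\nabla_XY-\frac12(\nabla_XJ)JY$, and the Kobayashi–Nomizu connection is $\nabla^1_XY=\nabla^0_XY-\frac14[(\nabla_YJ)JX-(\nabla_{JY}J)X]$. For $k=0,1$: $R^k(X,Y)Z=\nabla^k_X\nabla^k_YZ-\nabla^k_Y\nabla^k_XZ-\nabla^k_{[X,Y]}Z$; $\rho^k(X,Y)=-g(R^k(X,e_1)Y,e_1)-g(R^k(X,e_2)Y,e_2)+g(R^k(X,e_3)Y,e_3)$; $\widetilde\rho^k(X,Y)=\frac12(\rho^k(X,Y)+\rho^k(Y,X))$; $\widetilde{\mathrm{Ric}}^k$ is defined by $\widetilde\rho^k(X,Y)=g(\widetilde{\mathrm{Ric}}^k(X),Y)$; and $s^k=\widetilde\rho^k(e_1,e_1)+\widetilde\rho^k(e_2,e_2)-\widetilde\rho^k(e_3,e_3)$. A derivation of $\mathfrak{g}$ is a linear map $D$ with $D[X,Y]=[DX,Y]+[X,DY]$. $(G,g,J)$ is an algebraic Schouten soliton associated to $\nabla^k$ (with real constants $\lambda_0,c$) if $\widetilde{\mathrm{Ric}}^k=(s^k\lambda_0+c)\mathrm{Id}+D$ for some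 derivation $D$. *)

(* Defs.v *)
From HB Require Import structures.
From mathcomp Require Import all_boot all_order all_algebra.
From mathcomp Require Import reals.
Set Implicit Arguments. Unset Strict Implicit. Unset Printing Implicit Defensive.
Import Order.TTheory GRing.Theory Num.Theory.
Local Open Scope ring_scope.

Section Defs.
Variable R : realType.
Variables alpha beta : R.

Notation V := 'rV[R]_3.

Definition vec3 (a b c : R) : V := \row_(i < 3) [:: a; b; c]`_i.

Definition e (i : 'I_3) : V := delta_mx 0 i.
Definition e1 : V := vec3 1 0 0.
Definition e2 : V := vec3 0 1 0.
Definition e3 : V := vec3 0 0 1.

Definition eps (i : 'I_3) : R := if val i == 2%N then -1 else 1.

Definition brE (i j : 'I_3) : V :=
  match val i, val j with
  | 0%N, 1%N => vec3 alpha 0 (- beta)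
  | 1%N, 0%N => - vec3 alpha 0 (- beta)
  | 0%N, 2%N => vec3 (- alpha) (- beta) 0
  | 2%N, 0%N => - vec3 (- alpha) (- beta) 0
  | 1%N, 2%N => vec3 beta alpha alpha
  | 2%N, 1%N => - vec3 beta alpha alpha
  | _, _ => 0
  end.

Definition br (X Y : V) : V := \sum_(i < 3) \sum_(j < 3) (X 0 i * Y 0 j) *: brE i j.

Definition g (X Y : V) : R := \sum_(i < 3) eps i * X 0 i * Y 0 i.

(* Levi-Civita connection on left-invariant fields (Koszul formula):
   2 g(nabla_X Y, Z) = g([X,Y],Z) - g([Y,Z],X) + g([Z,X],Y) *)
Definition nabla (X Y : V) : V :=
  \sum_(k < 3) (eps k * (2^-1 * (g (br X Y) (e k) - g (br Y (e k)) X + g (br (e k) X) Y))) *: e k.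

Definition J (X : V) : V := \row_(i < 3) (eps i * X 0 i).

Definition nablaJ (X Y : V) : V := nabla X (J Y) - J (nabla X Y).

Definition nabla0 (X Y : V) : V := nabla X Y - 2^-1 *: nablaJ X (J Y).

Definition curv0 (X Y Z : V) : V :=
  nabla0 X (nabla0 Y Z) - nabla0 Y (nabla0 X Z) - nabla0 (br X Y) Z.

Definition rho0 (X Y : V) : R :=
  - g (curv0 X e1 Y) e1 - g (curv0 X e2 Y) e2 + g (curv0 X e3 Y) e3.

Definition rhot0 (X Y : V) : R := 2^-1 * (rho0 X Y + rho0 Y X).

(* Ric~^0 defined by rhot0 X Y = g (Ric X) Y *)
Definition Ric0 (X : V) : V := \sum_(k < 3) (eps k * rhot0 X (e k)) *: e k.

Definition scal0 : R := rhot0 e1 e1 + rhot0 e2 e2 - rhot0 e3 e3.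

(* derivation of g_1, as a linear map X |-> X *m D *)
Definition is_derivation (D : 'M[R]_3) : Prop :=
  forall X Y : V, br X Y *m D = br (X *m D) Y + br X (Y *m D).

Definition algebraic_schouten_soliton0 (lambda0 c : R) : Prop :=
  exists D : 'M[R]_3, is_derivation D /\
    forall X : V, Ric0 X = (scal0 * lambda0 + c) *: X + X *m D.

End Defs.

(* Main.v *)
Require Import Defs.
From HB Require Import structures.
From mathcomp Require Import all_boot all_order all_algebra.
From mathcomp Require Import reals ring lra.
Import Order.TTheory GRing.Theory Num.Theory.
Set Implicit Arguments. Unset Strict Implicit.
Local Open Scope ring_scope.

Definition i0 : 'I_3 := @Ordinal 3 0 isT.
Definition i1 : 'I_3 := @Ordinal 3 1 isT.
Definition i2 : 'I_3 := @Ordinal 3 2 isT.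

Lemma sum3 (R : realType) (F : 'I_3 -> R) : \sum_(i < 3) F i = F i0 + F i1 + F i2.
Proof.
rewrite !big_ord_recl big_ord0 addr0 addrA.
by congr (_ + _ + _); congr F; apply: val_inj.
Qed.

Lemma sum3v (R : realType) (F : 'I_3 -> 'rV[R]_3) : \sum_(i < 3) F i = F i0 + F i1 + F i2.
Proof.
rewrite !big_ord_recl big_ord0 addr0 addrA.
by congr (_ + _ + _); congr F; apply: val_inj.
Qed.

Lemma row3P (R : realType) (u v : 'rV[R]_3) :
  u 0 i0 = v 0 i0 -> u 0 i1 = v 0 i1 -> u 0 i2 = v 0 i2 -> u = v.
Proof.
move=> h0 h1 h2; apply/rowP => j;
case: j => [[|[|[|//]]] Hj].
- by rewrite (_ : Ordinal Hj = i0) //; apply: val_inj.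
- by rewrite (_ : Ordinal Hj = i1) //; apply: val_inj.
- by rewrite (_ : Ordinal Hj = i2) //; apply: val_inj.
Qed.

Lemma vec3E (R : realType) (a b c : R) :
  [/\ vec3 a b c 0 i0 = a, vec3 a b c 0 i1 = b & vec3 a b c 0 i2 = c].
Proof. by rewrite !mxE. Qed.

Lemma eE (R : realType) : [/\ e R i0 = vec3 1 0 0, e R i1 = vec3 0 1 0 & e R i2 = vec3 0 0 1].
Proof. by split; apply: row3P; rewrite !mxE. Qed.

Lemma epsE (R : realType) : [/\ eps R i0 = 1, eps R i1 = 1 & eps R i2 = -1].
Proof. by []. Qed.

Definition brF (R : realType) (a b : R) (X Y : 'rV[R]_3) : 'rV[R]_3 :=
  let p01 := X 0 i0 * Y 0 i1 - X 0 i1 * Y 0 i0 in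
  let p02 := X 0 i0 * Y 0 i2 - X 0 i2 * Y 0 i0 in
  let p12 := X 0 i1 * Y 0 i2 - X 0 i2 * Y 0 i1 in
  vec3 (a * p01 - a * p02 + b * p12) (- b * p02 + a * p12) (- b * p01 + a * p12).

Lemma brFE (R : realType) (a b : R) X Y : br a b X Y = brF a b X Y.
Proof.
apply: row3P; rewrite /br /brF !summxE !sum3 !summxE !sum3 /brE /= !mxE /=; ring.
Qed.

Lemma gE (R : realType) (X Y : 'rV[R]_3) : g X Y = X 0 i0 * Y 0 i0 + X 0 i1 * Y 0 i1 - X 0 i2 * Y 0 i2.
Proof. rewrite /g sum3 /eps /=; ring. Qed.

Lemma JE (R : realType) (X : 'rV[R]_3) : J X = vec3 (X 0 i0) (X 0 i1) (- X 0 i2).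
Proof. apply: row3P; rewrite !mxE /eps /=; ring. Qed.

Lemma e0E (R : realType) : e R i0 = vec3 1 0 0. Proof. by case: (eE R). Qed.
Lemma e1E (R : realType) : e R i1 = vec3 0 1 0. Proof. by case: (eE R). Qed.
Lemma e2E (R : realType) : e R i2 = vec3 0 0 1. Proof. by case: (eE R). Qed.
Ltac crunch := 
  rewrite ?sum3v ?e0E ?e1E ?e2E /eps /= ?JE ?brFE ?gE /brF ?mxE /=.

Lemma nablaE (R : realType) (a b : R) X Y :
  nabla a b X Y = vec3
   (a * X 0 i0 * Y 0 i1 - a * X 0 i0 * Y 0 i2 + 2^-1 * b * (X 0 i1 * Y 0 i2 - X 0 i2 * Y 0 i1))
   (- a * X 0 i0 * Y 0 i0 + a * X 0 i1 * Y 0 i2 - a * X 0 i2 * Y 0 i2 + 2^-1 * b * (X 0 i2 * Y 0 i0 - X 0 i0 * Y 0 i2))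
   (- a * X 0 i0 * Y 0 i0 + a * X 0 i1 * Y 0 i1 - a * X 0 i2 * Y 0 i1 + 2^-1 * b * (X 0 i1 * Y 0 i0 - X 0 i0 * Y 0 i1)).
Proof.
rewrite /nabla sum3v e0E e1E e2E /eps /=.
rewrite !brFE /brF.
apply: row3P; rewrite !mxE /= !gE !mxE /=.
all: by field.
Qed.

Lemma nabla0E (R : realType) (a b : R) X Y :
  nabla0 a b X Y = (a * X 0 i0 - 2^-1 * b * X 0 i2) *: vec3 (Y 0 i1) (- Y 0 i0) 0.
Proof.
rewrite /nabla0 /nablaJ !nablaE !JE; apply: row3P; rewrite !mxE /=; by field.
Qed.

Definition phi (R : realType) (a b : R) (X : 'rV[R]_3) := a * X 0 i0 - 2^-1 * b * X 0 i2.

Lemma curv0E (R : realType) (a b : R) X Y Z :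
  curv0 a b X Y Z = - phi a b (br a b X Y) *: vec3 (Z 0 i1) (- Z 0 i0) 0.
Proof.
rewrite /curv0 !nabla0E /phi; apply: row3P; rewrite !mxE /=; ring.
Qed.

Lemma rho0E (R : realType) (a b : R) X Y :
  rho0 a b X Y = (- a^+2 * X 0 i1 + a^+2 * X 0 i2 - 2^-1 * b^+2 * X 0 i1) * Y 0 i1
    - (a^+2 * X 0 i0 + 2^-1 * b^+2 * X 0 i0 - 2^-1 * a * b * X 0 i2) * Y 0 i0.
Proof.
rewrite /rho0 !curv0E /phi !brFE /brF /e1 /e2 /e3 !gE !mxE /=; by field.
Qed.

Lemma Ric0E (R : realType) (a b : R) X :
  Ric0 a b X = vec3 ((- 2^-1 * b^+2 - a^+2) * X 0 i0 + 4^-1 * a * b * X 0 i2)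
                    ((- 2^-1 * b^+2 - a^+2) * X 0 i1 + 2^-1 * a^+2 * X 0 i2)
                    (- 4^-1 * a * b * X 0 i0 - 2^-1 * a^+2 * X 0 i1).
Proof.
rewrite /Ric0 sum3v e0E e1E e2E /eps /= /rhot0 !rho0E; apply: row3P; rewrite !mxE /=.
all: by field.
Qed.

Lemma scal0E (R : realType) (a b : R) : scal0 a b = - b^+2 - 2 * a^+2.
Proof.
rewrite /scal0 /rhot0 !rho0E /e1 /e2 /e3 !mxE /=. by field.
Qed.

Definition Dm (R : realType) (a b k : R) : 'M[R]_3 :=
  \matrix_(i, j) (Ric0 a b (e R i) 0 j) - k%:M.

Lemma mulDm (R : realType) (a b k : R) X : X *m Dm a b k = Ric0 a b X - k *: X.
Proof.
apply: row3P; rewrite !mxE !sum3 !mxE /= e0E e1E e2E !Ric0E !mxE /=; ring.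
Qed.

Lemma Dm_deriv (R : realType) (a : R) : is_derivation a 0 (Dm a 0 (- 2^-1 * a^+2)).
Proof.
move=> X Y; rewrite !mulDm !brFE /brF; apply: row3P; rewrite !Ric0E !mxE /=; by field.
Qed.

Lemma Dm_nec (R : realType) (a b k : R) : a != 0 ->
  is_derivation a b (Dm a b k) -> b = 0 /\ k = - 2^-1 * a^+2.
Proof.
move=> a0 Hd; have := Hd (e1 R) (e2 R); rewrite !mulDm !brFE /brF /e1 /e2.
move=> H; have H0 := congr1 (fun v : 'rV[R]_3 => v 0 i0) H.
have H1 := congr1 (fun v : 'rV[R]_3 => v 0 i1) H.
move: H0 H1; rewrite !Ric0E !mxE /= => H0 H1.
have hb : b = 0.
  move: H1; match goal with |- ?l = ?r -> _ => 
    have E : l - r = - (5/4) * (a^+2 * b) by field end.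
  move=> H1; move: E; rewrite H1 subrr => E.
  have : a^+2 * b = 0 by lra.
  by move/eqP; rewrite mulf_eq0 sqrf_eq0 (negbTE a0) /= => /eqP.
split=> //.
move: H0; rewrite hb; match goal with |- ?l = ?r -> _ => 
    have E : l - r = a * (k + 2^-1 * a^+2) by field end.
move=> H0; move: E; rewrite H0 subrr => /esym /eqP.
rewrite mulf_eq0 (negbTE a0) /= addr_eq0 => /eqP ->; by rewrite mulNr.
Qed.

Theorem theorem4p2 (R : realType) (alpha beta lambda0 c : R) :
  alpha != 0 ->
  (algebraic_schouten_soliton0 alpha beta lambda0 c <->
   beta = 0 /\ c = - 2^-1 * alpha ^+ 2 + 2 * alpha ^+ 2 * lambda0).
Proof.
move=> a0; split.
- case=> D [Hd HR].
  have HD : D = Dm alpha beta (scal0 alpha beta * lambda0 + c).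
    apply/matrixP => i j; have := HR (e R i); move/rowP/(_ j).
    rewrite /Dm /e -rowE !mxE eqxx /= => ->.
    by rewrite (eq_sym j i); case: (i == j); rewrite ?mulr1n ?mulr0n ?mulr1 ?mulr0; ring.
  rewrite HD in Hd; have [hb hk] := Dm_nec a0 Hd.
  split=> //.
  have -> : c = (scal0 alpha beta * lambda0 + c) - scal0 alpha beta * lambda0 by ring.
  rewrite hk scal0E hb; ring.
- case=> hb hc; subst beta.
  exists (Dm alpha 0 (scal0 alpha 0 * lambda0 + c)); split.
    have -> : scal0 alpha 0 * lambda0 + c = - 2^-1 * alpha^+2 by rewrite scal0E hc; ring.
    exact: Dm_deriv.
  by move=> X; rewrite mulDm addrC subrK.
Qed.
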